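(* Let $H$ be a finite simple graph on vertex set $\{x_1,\dots,x_n\}$ ($n\ge 1$) and let $G=w(H)$ be its whiskered graph, a graph on $2n$ vertices. Then the independence complex $\operatorname{Ind}(G)$ is a pseudo-manifold (of dimension $n-1$). Moreover, if $|E(G)|\ge n+1$ (equivalently, $H$ has at least one edge), then $\operatorname{Ind}(G)$ is a pseudo-manifold with boundary.
   Context: All graphs are finite and simple. For a graph $H$ with vertex set $\{x_1,\dots,x_n\}$, the whiskered graph $w(H)$ has vertex set $\{x_1,\dots,x_n,y_1,\dots,y_n\}$ and edge set $E(H)\cup\{\{x_i,y_i\}: i=1,\dots,n\}$; a graph is called whiskered if it equals $w(H)$ for some graph $H$. A subset $W$ of the vertex set of a graph is independent if no edge has both endpoints in $W$; the independence complex $\operatorname{Ind}(G)$ is the simplicial complex whose faces are the independent sets of $G$. A face $F$ has dimension $|F|-1$; facets are maximal faces; a complex is pure if all facets have the same dimension. A $d$-dimensional simplicial complex $\Delta$ is a pseudo-manifold if (1) $\Delta$ is pure; (2) every $(d-1)$-dimensional face is contained in at most two facets; (3) for any two facets $F,F'$ there is a sequence of facets $F=G_0,G_1,\dots,G_t=F'$ with $\dim(G_i\cap G_{i+1})=d-1$ for all $i$. A pseudo-manifold has boundary if at least one $(d-1)$-dimensional face is contained in exactly one facet. *)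

(* Defs.v *)
From mathcomp Require Import all_boot.
Set Implicit Arguments. Unset Strict Implicit. Unset Printing Implicit Defensive.

Definition simple_graph (V : finType) (e : rel V) : Prop :=
  symmetric e /\ irreflexive e.

Definition edge_set (V : finType) (e : rel V) : {set {set V}} :=
  [set [set x; y] | x in V, y in V & e x y].

(* Whiskered graph w(H): vertices x_i = inl i, y_i = inr i. *)
Definition whisker (n : nat) (e : rel 'I_n) : rel ('I_n + 'I_n) :=
  fun u v =>
    match u, v with
    | inl i, inl j => e i j
    | inl i, inr j => i == j
    | inr i, inl j => i == j
    | inr _, inr _ => false
    end.

Definition independent (V : finType) (e : rel V) (W : {set V}) : bool :=
  [forall x in W, forall y in W, ~~ e x y].

Definition Ind (V : finType) (e : rel V) : {set {set V}} :=
  [set W | independent e W].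

Definition facet (V : finType) (D : {set {set V}}) (F : {set V}) : bool :=
  (F \in D) && [forall G in D, (F \subset G) ==> (G == F)].

(* Two facets are adjacent if their intersection has dimension d-1,
   i.e. cardinality d, in a d-dimensional complex. *)
Definition facet_adj (V : finType) (D : {set {set V}}) (d : nat) : rel {set V} :=
  fun F F' => [&& facet D F, facet D F' & #|F :&: F'| == d].

(* A d-dimensional pseudo-manifold (dimension of a face F is #|F| - 1). *)
Definition pseudo_manifold (V : finType) (D : {set {set V}}) (d : nat) : Prop :=
  (exists2 F, F \in D & #|F| = d.+1) /\
  (forall F, F \in D -> #|F| <= d.+1) /\
  (forall F, facet D F -> #|F| = d.+1) /\
  (forall G, G \in D -> #|G| = d ->
     #|[set F | facet D F & G \subset F]| <= 2) /\
  (forall F F', facet D F -> facet D F' ->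
     exists2 s : seq {set V}, path (facet_adj D d) F s & last F s = F').

Definition has_boundary (V : finType) (D : {set {set V}}) (d : nat) : Prop :=
  exists2 G, G \in D & (#|G| = d /\ #|[set F | facet D F & G \subset F]| = 1).

Definition pseudo_manifold_with_boundary (V : finType) (D : {set {set V}}) (d : nat) : Prop :=
  pseudo_manifold D d /\ has_boundary D d.

(* Main.v *)
Require Import Defs.
From mathcomp Require Import all_boot.
Set Implicit Arguments. Unset Strict Implicit. Unset Printing Implicit Defensive.

Definition idx (n : nat) (v : 'I_n + 'I_n) : 'I_n :=
  match v with inl i => i | inr i => i end.

Lemma indP (n : nat) (e : rel 'I_n) (W : {set 'I_n + 'I_n}) :
  reflect (forall x y, x \in W -> y \in W -> ~~ whisker e x y) (W \in Ind (whisker e)).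
Proof.
rewrite inE; apply: (iffP forallP) => [H x y xW yW | H x].
  by move/implyP: (H x) => /(_ xW) /forallP /(_ y) /implyP /(_ yW).
by apply/implyP => xW; apply/forallP => y; apply/implyP => yW; apply: H.
Qed.

Lemma idx_inj (n : nat) (e : rel 'I_n) (W : {set 'I_n + 'I_n}) :
  W \in Ind (whisker e) -> {in W &, injective (@idx n)}.
Proof.
move/indP => H [i|i] [j|j] iW jW /= ij; subst j => //.
  by move: (H _ _ iW jW) => /=; rewrite eqxx.
by move: (H _ _ iW jW) => /=; rewrite eqxx.
Qed.

Lemma ind_card (n : nat) (e : rel 'I_n) (W : {set 'I_n + 'I_n}) :
  W \in Ind (whisker e) -> #|W| <= n.
Proof.
move=> WI; rewrite -(card_in_imset (idx_inj WI)).
by apply: leq_trans (max_card _) _; rewrite card_ord.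
Qed.

Lemma sub_ind (n : nat) (e : rel 'I_n) (W W' : {set 'I_n + 'I_n}) :
  W \subset W' -> W' \in Ind (whisker e) -> W \in Ind (whisker e).
Proof.
move=> /subsetP s /indP H; apply/indP => x y xW yW; apply: H; exact: s.
Qed.

Lemma facet_cover (n : nat) (e : rel 'I_n) (F : {set 'I_n + 'I_n}) :
  facet (Ind (whisker e)) F -> forall i, (inl i \in F) || (inr i \in F).
Proof.
case/andP => FI /forallP mx i; apply/negPn/negP; rewrite negb_or => /andP [nl nr].
have FI' : inr i |: F \in Ind (whisker e).
  apply/indP => x y; rewrite !inE => /orP [/eqP->|xF] /orP [/eqP->|yF] //.
  - by case: y yF => [j|j] //= jF; apply/eqP => ij; subst j; rewrite jF in nl.
  - by case: x xF => [j|j] //= jF; apply/eqP => ij; subst j; rewrite jF in nl.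
  - by move/indP: FI; apply.
have := mx (inr i |: F); rewrite FI' subsetUr /= => /eqP E.
by move: nr; rewrite -E setU11.
Qed.

Lemma facet_card (n : nat) (e : rel 'I_n) (F : {set 'I_n + 'I_n}) :
  facet (Ind (whisker e)) F -> #|F| = n.
Proof.
move=> fF; have FI : F \in Ind (whisker e) by case/andP: fF.
rewrite -(card_in_imset (idx_inj FI)).
suff -> : (@idx n) @: F = setT by rewrite cardsT card_ord.
apply/setP => i; rewrite inE; case/orP: (facet_cover fF i) => h.
  by apply/imsetP; exists (inl i).
by apply/imsetP; exists (inr i).
Qed.

Lemma facetP (n : nat) (e : rel 'I_n) (F : {set 'I_n + 'I_n}) :
  facet (Ind (whisker e)) F <-> F \in Ind (whisker e) /\ #|F| = n.
Proof.
split => [fF|[FI cF]].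
  have cF := facet_card fF.
  by case/andP: fF.
apply/andP; split => //; apply/forallP => G; apply/implyP => GI; apply/implyP => sFG.
by rewrite eq_sym eqEcard sFG cF (ind_card GI).
Qed.

Lemma addY (n : nat) (e : rel 'I_n) (W : {set 'I_n + 'I_n}) i :
  W \in Ind (whisker e) -> inl i \notin W -> inr i |: W \in Ind (whisker e).
Proof.
move=> WI nl; apply/indP => x y; rewrite !inE => /orP [/eqP->|xF] /orP [/eqP->|yF] //.
- by case: y yF => [j|j] //= jF; apply/eqP => ij; subst j; rewrite jF in nl.
- by case: x xF => [j|j] //= jF; apply/eqP => ij; subst j; rewrite jF in nl.
- by move/indP: WI; apply.
Qed.

Lemma cover_card (n : nat) (e : rel 'I_n) (F : {set 'I_n + 'I_n}) :
  F \in Ind (whisker e) -> (forall i, (inl i \in F) || (inr i \in F)) -> #|F| = n.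
Proof.
move=> FI cov; rewrite -(card_in_imset (idx_inj FI)).
suff -> : (@idx n) @: F = setT by rewrite cardsT card_ord.
apply/setP => i; rewrite inE; case/orP: (cov i) => h.
  by apply/imsetP; exists (inl i).
by apply/imsetP; exists (inr i).
Qed.

Definition Yset (n : nat) : {set 'I_n + 'I_n} :=
  [set v | if v is inr _ then true else false].

Lemma Y_facet (n : nat) (e : rel 'I_n) : facet (Ind (whisker e)) (Yset n).
Proof.
have YI : Yset n \in Ind (whisker e).
  by apply/indP => [[a|a] [b|b]]; rewrite !inE.
apply/facetP; split => //; apply: (cover_card YI) => i.
by rewrite !inE orbT.
Qed.

Lemma two_facets (n : nat) (e : rel 'I_n) (G : {set 'I_n + 'I_n}) :
  0 < n -> G \in Ind (whisker e) -> #|G| = n.-1 ->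
  #|[set F | facet (Ind (whisker e)) F & G \subset F]| <= 2.
Proof.
move=> n0 GI cG.
have : 0 < #|~: ((@idx n) @: G)|.
  have := cardsC ((@idx n) @: G); rewrite card_ord (card_in_imset (idx_inj GI)) cG.
  by move=> h; rewrite -(ltn_add2l n.-1) addn0 h prednK.
rewrite card_gt0 => /set0Pn [k]; rewrite inE => kG.
have sub : [set F | facet (Ind (whisker e)) F & G \subset F] \subset
           [set inl k |: G; inr k |: G].
  apply/subsetP => F; rewrite !inE => /andP [fF sGF].
  have cF := facet_card fF.
  suff : exists2 w, w \in F & idx w = k.
    case=> w wF wk.
    have wG : w \notin G by apply: contra kG => wG; apply/imsetP; exists w.
    have sw : w |: G \subset F by rewrite subUset sub1set wF.
    have /eqP E : w |: G == F.
      by rewrite eqEcard sw cF cardsU1 wG cG /= add1n prednK.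
    by case: w wk {wF wG sw} E => a /= -> <-; rewrite eqxx ?orbT.
  by case/orP: (facet_cover fF k) => h; [exists (inl k) | exists (inr k)].
apply: leq_trans (subset_leq_card sub) _.
by rewrite cards2; case: (_ != _).
Qed.

Definition isl (n : nat) (v : 'I_n + 'I_n) : bool := if v is inl _ then true else false.

Lemma conn_Y (n : nat) (e : rel 'I_n) (F : {set 'I_n + 'I_n}) :
  0 < n -> facet (Ind (whisker e)) F ->
  connect (facet_adj (Ind (whisker e)) n.-1) F (Yset n).
Proof.
move=> n0.
suff H : forall m F, facet (Ind (whisker e)) F -> #|[set v in F | isl v]| <= m ->
  connect (facet_adj (Ind (whisker e)) n.-1) F (Yset n) by move=> fF; exact: H fF (leqnn _).
elim=> [|m IH] {}F fF.
  rewrite leqn0 cards_eq0 => /eqP E.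
  have -> // : F = Yset n.
  apply/eqP; rewrite eqEcard (facet_card fF) (facet_card (Y_facet e)) leqnn andbT.
  apply/subsetP => -[a|a] aF; rewrite inE //.
  have : inl a \in [set v in F | isl v] by rewrite inE aF.
  by rewrite E inE.
case: (set_0Vmem [set v in F | isl v]) => [E _|[v]].
  by apply: IH => //; rewrite E cards0.
rewrite inE => /andP [vF]; case: v vF => // i iF _ cm.
move/facetP: (fF) => [FI cF].
set F' := inr i |: (F :\ inl i).
have F'I : F' \in Ind (whisker e).
  by apply: addY; [apply: sub_ind FI; apply: subsetDl | rewrite setD11].
have riF : inr i \notin F.
  by apply/negP => rF; move/indP: FI => /(_ _ _ iF rF); rewrite /= eqxx.
have cF' : #|F'| = n.
  apply: (etrans _ cF); rewrite cardsU1 (cardsD1 (inl i) F) iF.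
  suff -> : inr i \notin F :\ inl i by [].
  by rewrite !inE negb_and riF orbT.
have fF' : facet (Ind (whisker e)) F' by apply/facetP.
apply: connect_trans (IH F' fF' _).
  apply: connect1; rewrite /facet_adj fF fF' /=.
  have -> : F :&: F' = F :\ inl i.
    apply/setP => x; rewrite !inE; case: (x =P inl i) => [->|_]; rewrite ?andbF //=.
    by case: (x =P inr i) => [->|] /=; rewrite ?(negbTE riF) ?andbb.
  by rewrite (cardsD1 (inl i) F) iF add1n in cF; move: cF => /(congr1 predn) /= ->.
have -> : [set v in F' | isl v] = [set v in F | isl v] :\ inl i.
  apply/setP => x; rewrite !inE; case: x => a //=.
  by rewrite !andbT.  by rewrite !andbF.
rewrite (cardsD1 (inl i)) inE iF /= add1n in cm.
by rewrite -ltnS.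
Qed.

Lemma edge_exists (n : nat) (e : rel 'I_n) :
  n.+1 <= #|edge_set (whisker e)| -> exists i j, e i j.
Proof.
case: (pickP (fun p : 'I_n * 'I_n => e p.1 p.2)) => [[i j] /= h _|none].
  by exists i, j.
have sub : edge_set (whisker e) \subset
           [set [set (inl i : 'I_n + 'I_n); inr i] | i in 'I_n].
  apply/subsetP => S /imset2P [x y _]; rewrite inE => wxy ->.
  case: x y wxy => a [b|b] //= h.
  - by have := none (a, b); rewrite /= h.
  - by move/eqP: h => <-; apply/imsetP; exists a.
  - by move/eqP: h => <-; apply/imsetP; exists a => //; rewrite setUC.
move=> h; have := leq_trans h (subset_leq_card sub).
have := leq_imset_card (fun i : 'I_n => [set (inl i : 'I_n + 'I_n); inr i]) 'I_n.
by rewrite card_ord => a b; have := leq_trans b a; rewrite ltnn.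
Qed.

Lemma boundary (n : nat) (e : rel 'I_n) i j :
  simple_graph e -> e i j -> has_boundary (Ind (whisker e)) n.-1.
Proof.
move=> [sym irr] eij.
have ij : i != j by apply: contraTneq eij => ->; rewrite irr.
set F0 : {set 'I_n + 'I_n} := inl i |: (Yset n :\ inr i).
have F0I : F0 \in Ind (whisker e).
  apply/indP => -[a|a] [b|b]; rewrite !inE //= ?orbF.
  - by move=> /eqP[->] /eqP[->]; rewrite irr.
  - by move=> /eqP[->] /andP [nb _]; apply: contra nb => /eqP->.
  - by move=> /andP [na _] /eqP[->]; rewrite eq_sym; apply: contra na => /eqP->.
have cF0 : #|F0| = n.
  apply: (cover_card F0I) => l; rewrite !inE.
  case: (l =P i) => [->|/eqP nl]; rewrite ?eqxx //=.
  by apply/orP; right; rewrite andbT; apply: contra nl => /eqP[->].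
have fF0 : facet (Ind (whisker e)) F0 by apply/facetP.
have jF0 : inr j \in F0 by rewrite !inE /= andbT; apply/eqP => -[] /eqP; rewrite eq_sym (negbTE ij).
exists (F0 :\ inr j).
  by apply: sub_ind F0I; apply: subsetDl.
split.
  by rewrite (cardsD1 (inr j) F0) jF0 add1n in cF0; move: cF0 => /(congr1 predn) /= ->.
have -> : [set F | facet (Ind (whisker e)) F & F0 :\ inr j \subset F] = [set F0].
  apply/setP => F; rewrite !inE; apply/andP/eqP => [[fF sF]|->]; last first.
    by rewrite fF0 subsetDl.
  have liF : inl i \in F by apply: (subsetP sF); rewrite !inE /= eqxx.
  have rjF : inr j \in F.
    case/orP: (facet_cover fF j) => // ljF.
    by case/andP: fF => /indP /(_ _ _ liF ljF); rewrite /= eij.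
  apply/eqP; rewrite eq_sym eqEcard (facet_card fF) cF0 leqnn andbT.
  by rewrite -(setD1K jF0) subUset sub1set rjF sF.
by rewrite cards1.
Qed.

Theorem theorem3p1 (n : nat) (e : rel 'I_n) :
  0 < n -> simple_graph e ->
  pseudo_manifold (Ind (whisker e)) n.-1 /\
  (n.+1 <= #|edge_set (whisker e)| ->
     pseudo_manifold_with_boundary (Ind (whisker e)) n.-1).
Proof.
move=> n0 sg.
have PM : pseudo_manifold (Ind (whisker e)) n.-1.
  rewrite /pseudo_manifold prednK //.
  split; first by exists (Yset n); case/facetP: (Y_facet e).
  split; first by move=> F; apply: ind_card.
  split; first by move=> F; apply: facet_card.
  split; first by move=> G GI cG; apply: two_facets.
  move=> F F' fF fF'.
  have sym : symmetric (facet_adj (Ind (whisker e)) n.-1).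
    by move=> A B; rewrite /facet_adj setIC andbCA.
  have : connect (facet_adj (Ind (whisker e)) n.-1) F F'.
    apply: connect_trans (conn_Y n0 fF) _.
    by rewrite (sym_connect_sym sym); apply: conn_Y.
  by case/connectP => p pth ->; exists p.
split => // h; split => //.
case: (edge_exists h) => i [j eij]; exact: boundary sg eij.
Qed.
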